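(* Let $f=e^{-\psi}\colon\mathbb R^d\to[0,\infty)$ be an upper semi-continuous log-concave function, $u\in\operatorname{supp}f$, $v\in\mathbb R^d$, $\nu\in\mathbb R$. Then $(v,\nu)\in N_{\operatorname{epi}\psi}((u,\psi(u)))$ if and only if $\bigl(v,-\nu/f(u)\bigr)\in N_{\mathrm{lift}(f)}((u,f(u)))$. Furthermore, $P_d\bigl(N_{\mathrm{lift}(f)}((u,f(u)))\bigr)\subseteq N_{[f\ge f(u)]}(u)$.
   Context: $\operatorname{supp}f=\{x:f(x)>0\}$; $\operatorname{epi}\psi=\{(x,\xi):\psi(x)<\infty,\xi\ge\psi(x)\}$. Lifting $\mathrm{lift}(f)=\{(x,y)\in\mathbb R^d\times\mathbb R:x\in\overline{\operatorname{supp}f},|y|\le f(x)\}$. Fréchet normal cone of $A\subset\mathbb R^n$ at $a_0\in A$: $N_A(a_0)=\{v:\forall\varepsilon>0\,\exists\delta>0:\langle v,a-a_0\rangle\le\varepsilon|a-a_0|\ \forall a\in A,|a-a_0|\le\delta\}$. $[f\ge t]=\{x:f(x)\ge t\}$. $P_d\colon\mathbb R^{d+1}\to\mathbb R^d$ is the orthogonal projection onto the first $d$ coordinates. *)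

(* Defs.v *)
From HB Require Import structures.
From mathcomp Require Import all_boot all_order all_algebra.
From mathcomp Require Import all_classical all_reals all_analysis.
Set Implicit Arguments. Unset Strict Implicit. Unset Printing Implicit Defensive.
Import Order.TTheory GRing.Theory Num.Theory.
Import numFieldNormedType.Exports.
Local Open Scope classical_set_scope.
Local Open Scope ring_scope.

Section Defs.
Variable R : realType.

Definition dotv n (x y : 'rV[R]_n) : R := \sum_(i < n) x 0 i * y 0 i.
Definition enorm n (x : 'rV[R]_n) : R := Num.sqrt (dotv x x).

Definition normal_cone n (A : set 'rV[R]_n) (a0 : 'rV[R]_n) : set 'rV[R]_n :=
  [set v | forall eps : R, 0 < eps -> exists2 delta : R, 0 < delta &
     forall a, A a -> enorm (a - a0) <= delta ->
       dotv v (a - a0) <= eps * enorm (a - a0)].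

Definition pt d (x : 'rV[R]_d) (y : R) : 'rV[R]_(d + 1) :=
  row_mx x (\row_(j < 1) y).

Definition Pd d (z : 'rV[R]_(d + 1)) : 'rV[R]_d := lsubmx z.

Definition supp_fun d (f : 'rV[R]_d -> R) : set 'rV[R]_d := [set x | 0 < f x].

Definition superlevel d (f : 'rV[R]_d -> R) (t : R) : set 'rV[R]_d :=
  [set x | t <= f x].

Definition psi_of d (f : 'rV[R]_d -> R) (x : 'rV[R]_d) : \bar R :=
  if 0 < f x then (- ln (f x))%:E else +oo%E.

Definition epigraph d (psi : 'rV[R]_d -> \bar R) : set 'rV[R]_(d + 1) :=
  [set z | exists x xi, z = pt x xi /\ (psi x < +oo)%E /\ (psi x <= xi%:E)%E].

Definition liftf d (f : 'rV[R]_d -> R) : set 'rV[R]_(d + 1) :=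
  [set z | exists x y, z = pt x y /\ closure (supp_fun f) x /\ `|y| <= f x].

Definition usc_fun d (f : 'rV[R]_d -> R) : Prop :=
  forall x (eps : R), 0 < eps -> \forall y \near x, f y < f x + eps.

Definition log_concave d (f : 'rV[R]_d -> R) : Prop :=
  (forall x, 0 <= f x) /\
  forall x y (t : R), 0 <= t -> t <= 1 ->
    f x `^ (1 - t) * f y `^ t <= f ((1 - t) *: x + t *: y).

End Defs.

(* Main.v *)
Require Import Defs.
From HB Require Import structures.
From mathcomp Require Import all_boot all_order all_algebra.
From mathcomp Require Import all_classical all_reals all_analysis.
From mathcomp Require Import ring lra.
Import Order.TTheory GRing.Theory Num.Theory.
Local Open Scope classical_set_scope.
Local Open Scope ring_scope.
Set Implicit Arguments. Unset Strict Implicit.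

Section H.
Variable R : realType.

Lemma dotv_pt d (a c : 'rV[R]_d) (b e : R) :
  dotv (pt a b) (pt c e) = dotv a c + b * e.
Proof.
rewrite /dotv big_split_ord /= big_ord1; congr (_ + _).
  by apply: eq_bigr => i _; rewrite /pt !row_mxEl.
by rewrite /pt !row_mxEr !mxE.
Qed.

Lemma pt_sub d (a c : 'rV[R]_d) (b e : R) :
  pt a b - pt c e = pt (a - c) (b - e).
Proof.
rewrite /pt opp_row_mx add_row_mx; congr row_mx.
by apply/rowP => j; rewrite !mxE.
Qed.

Lemma dotv_ge0 d (a : 'rV[R]_d) : 0 <= dotv a a.
Proof. by apply: sumr_ge0 => i _; rewrite -expr2 sqr_ge0. Qed.

Lemma enorm_pt d (a : 'rV[R]_d) (b : R) :
  enorm (pt a b) = Num.sqrt (dotv a a + b ^+ 2).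
Proof. by rewrite /enorm dotv_pt expr2. Qed.

Lemma pt_surj d (z : 'rV[R]_(d + 1)) : z = pt (lsubmx z) (rsubmx z 0 0).
Proof.
rewrite -{1}(hsubmxK z) /pt; congr row_mx.
by apply/rowP => j; rewrite mxE (ord1 j).
Qed.

Lemma sq_absle (Q r : R) : 0 <= Q -> `|r| <= Num.sqrt (Q + r ^+ 2).
Proof.
move=> Q0; rewrite -sqrtr_sqr ler_sqrt; last by rewrite addr_ge0 // sqr_ge0.
by rewrite lerDr.
Qed.

Lemma sq_Qle (Q r : R) : 0 <= Q -> Num.sqrt Q <= Num.sqrt (Q + r ^+ 2).
Proof.
move=> Q0; rewrite ler_sqrt; last by rewrite addr_ge0 // sqr_ge0.
by rewrite lerDl sqr_ge0.
Qed.

Lemma sq_cmp (Q r1 r2 L : R) : 0 <= Q -> 1 <= L -> `|r1| <= L * `|r2| ->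
  Num.sqrt (Q + r1 ^+ 2) <= L * Num.sqrt (Q + r2 ^+ 2).
Proof.
move=> Q0 L1 H.
have L0 : 0 <= L by lra.
rewrite -[L in L * _]ger0_norm // -sqrtr_sqr -sqrtrM ?sqr_ge0 //.
rewrite ler_sqrt; last by rewrite mulr_ge0 ?sqr_ge0 // addr_ge0 // sqr_ge0.
have h1 : r1 ^+ 2 <= L ^+ 2 * r2 ^+ 2.
  rewrite -(real_normK (num_real r1)) -(real_normK (num_real r2)) -exprMn.
  by rewrite ler_pXn2r ?nnegrE ?mulr_ge0.
have h2 : Q <= L ^+ 2 * Q by rewrite ler_peMl // ; nra.
nra.
Qed.

Lemma ln_bounds (c y : R) : 0 < c -> 0 < y ->
  (y - c) <= y * (ln y - ln c) /\ c * (ln y - ln c) <= y - c.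
Proof.
move=> c0 y0.
have e1 : forall a b : R, 0 < a -> 0 < b -> b * (ln a - ln b) <= a - b.
  move=> a b a0 b0.
  have := expR_ge1Dx (ln a - ln b).
  rewrite expRD expRN !lnK ?posrE // => h.
  have : b * (1 + (ln a - ln b)) <= b * (a / b) by rewrite ler_pM2l.
  rewrite mulrCA divff ?gt_eqF // mulr1; lra.
split; last exact: e1.
have := e1 c y c0 y0; lra.
Qed.


Lemma err_bound (nu w c eps N2 B : R) : 0 < c -> 0 <= w -> 0 <= N2 ->
  c * w <= B -> `|nu| * B <= eps * c ^+ 2 / 2 * N2 ->
  `|nu * w / c| <= eps / 2 * N2.
Proof.
move=> c0 w0 N0 h1 h2.
rewrite normrM normrV ?unitfE ?gt_eqF // normrM (ger0_norm w0) (gtr0_norm c0).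
rewrite ler_pdivrMr //.
have h3 : `|nu| * (c * w) <= `|nu| * B by rewrite ler_wpM2l.
have h4 : c * (`|nu| * w) <= c * (eps / 2 * N2 * c).
  have -> : c * (eps / 2 * N2 * c) = eps * c ^+ 2 / 2 * N2 by ring.
  have -> : c * (`|nu| * w) = `|nu| * (c * w) by ring.
  lra.
by rewrite ler_pM2l in h4.
Qed.

Lemma comb_fwd (D nu t s c eps L N1 N2 del : R) :
  0 < c -> 0 < eps -> 1 <= L -> N1 <= L * N2 -> `|s| <= N2 -> N2 <= del ->
  del * (4 * `|nu| + 1) <= eps * c ^+ 2 -> 0 <= s + c * t ->
  c * (s + c * t) <= 2 * s ^+ 2 -> D + nu * t <= eps / (2 * L) * N1 ->
  D + (- nu / c) * s <= eps * N2.
Proof.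
move=> c0 e0 L1 hN hs hd hdel w0 hw hk.
have N0 : 0 <= N2 by apply: le_trans hs.
have -> : D + (- nu / c) * s = (D + nu * t) - nu * (s + c * t) / c.
  by field; rewrite gt_eqF.
have h1 : eps / (2 * L) * N1 <= eps / 2 * N2.
  have -> : eps / 2 * N2 = eps / (2 * L) * (L * N2).
    by field; rewrite gt_eqF //; lra.
  by rewrite ler_wpM2l // divr_ge0 //; lra.
have h2 : `|nu * (s + c * t) / c| <= eps / 2 * N2.
  apply: (@err_bound _ _ _ _ _ (2 * s ^+ 2)) => //.
  have hs2 : s ^+ 2 <= N2 * del.
    rewrite -(real_normK (num_real s)) expr2; apply: ler_pM => //; lra.
  have ha : 0 <= `|nu| := normr_ge0 nu.
  have e1 : `|nu| * (2 * s ^+ 2) <= `|nu| * (2 * (N2 * del)).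
    by rewrite ler_wpM2l //; lra.
  have e2 : N2 * (del * (4 * `|nu| + 1)) <= N2 * (eps * c ^+ 2).
    by rewrite ler_wpM2l.
  have e3 : 0 <= N2 * del by rewrite mulr_ge0 //; lra.
  nra.
have := ler_norm (nu * (s + c * t) / c); rewrite -normrN => h3.
have := ler_norm (- (nu * (s + c * t) / c)); rewrite normrN.
lra.
Qed.

Lemma comb_bwd (D nu t s c eps L N1 N2 del : R) :
  0 < c -> 0 < eps -> 1 <= L -> N1 <= L * N2 -> `|t| <= N2 -> N2 <= del ->
  del * (16 * `|nu| + 1) <= eps -> 0 <= s + c * t ->
  c * (s + c * t) <= 2 * s ^+ 2 -> `|s| <= 2 * c * `|t| ->
  D + (- nu / c) * s <= eps / (2 * L) * N1 ->
  D + nu * t <= eps * N2.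
Proof.
move=> c0 e0 L1 hN hs hd hdel w0 hw hst hk.
have N0 : 0 <= N2 by apply: le_trans hs.
have -> : D + nu * t = (D + (- nu / c) * s) + nu * (s + c * t) / c.
  by field; rewrite gt_eqF.
have h1 : eps / (2 * L) * N1 <= eps / 2 * N2.
  have -> : eps / 2 * N2 = eps / (2 * L) * (L * N2).
    by field; rewrite gt_eqF //; lra.
  by rewrite ler_wpM2l // divr_ge0 //; lra.
have h2 : `|nu * (s + c * t) / c| <= eps / 2 * N2.
  apply: (@err_bound _ _ _ _ _ (8 * c ^+ 2 * t ^+ 2)) => //.
    have : s ^+ 2 <= (2 * c * `|t|) ^+ 2.
      rewrite -(real_normK (num_real s)); rewrite ler_pXn2r ?nnegrE //.
      by rewrite mulr_ge0 // mulr_ge0 //; lra.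
    rewrite exprMn real_normK ?num_real //; nra.
  have ht2 : t ^+ 2 <= N2 * del.
    rewrite -(real_normK (num_real t)) expr2; apply: ler_pM => //; lra.
  have ha : 0 <= `|nu| := normr_ge0 nu.
  have hc2 : 0 < c ^+ 2 by rewrite exprn_gt0.
  have e1 : `|nu| * (8 * c ^+ 2 * t ^+ 2) <= `|nu| * (8 * c ^+ 2 * (N2 * del)).
    by rewrite ler_wpM2l // ler_wpM2l //; nra.
  have e2 : N2 * (del * (16 * `|nu| + 1)) <= N2 * eps.
    by rewrite ler_wpM2l.
  have e3 : 0 <= N2 * del by rewrite mulr_ge0 //; lra.
  nra.
have := ler_norm (nu * (s + c * t) / c).
lra.
Qed.

Lemma scal (c y : R) : 0 < c -> c / 2 <= y -> y <= 2 * c ->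
  let s := y - c in let t := ln c - ln y in
  [/\ 0 <= s + c * t, c * (s + c * t) <= 2 * s ^+ 2,
      c * `|t| <= 2 * `|s| & `|s| <= 2 * c * `|t|].
Proof.
move=> c0 h1 h2 s t.
have y0 : 0 < y by lra.
have [b1 b2] := @ln_bounds c y c0 y0.
have -> : t = - (ln y - ln c) by rewrite /t opprB.
rewrite /s; move: b1 b2; set A := ln y - ln c => b1 b2.
have w0 : 0 <= y - c + c * - A by lra.
have yw : y * (y - c + c * - A) <= (y - c) ^+ 2.
  have : c * (y - c) <= c * (y * A) by rewrite ler_pM2l.
  move=> h; rewrite expr2; nra.
split => //.
- have : c * (y - c + c * - A) <= 2 * y * (y - c + c * - A).
    by rewrite ler_wpM2r //; lra.
  nra.
- rewrite normrN; case: (lerP 0 A) => hA.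
    rewrite (ger0_norm hA) (ger0_norm (x := y - c)); [nra|nra].
  rewrite (ltr0_norm hA) (ltr0_norm (x := y - c)); last by nra.
  nra.
- rewrite normrN; case: (lerP 0 A) => hA.
    rewrite (ger0_norm hA) (ger0_norm (x := y - c)); [nra|nra].
  rewrite (ltr0_norm hA) (ltr0_norm (x := y - c)); last by nra.
  nra.
Qed.
End H.

Theorem mainTheorem7 (R : realType) (d : nat) (f : 'rV[R]_d -> R)
  (u v : 'rV[R]_d) (nu : R) :
  log_concave f -> usc_fun f -> supp_fun f u ->
  (normal_cone (epigraph (psi_of f)) (pt u (- ln (f u))) (pt v nu) <->
   normal_cone (liftf f) (pt u (f u)) (pt v (- nu / f u))) /\
  (@Pd R d @` normal_cone (liftf f) (pt u (f u))
     `<=` normal_cone (superlevel f (f u)) u).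
Proof.
move=> _ _ hu.
have c0 : 0 < f u := hu.
move: c0; set c := f u => c0.
split; first split.
- move=> He eps e0.
  pose L := 1 + 2 / c.
  have L1 : 1 <= L by rewrite /L lerDl; apply: divr_ge0; lra.
  have L0 : 0 < L by lra.
  have e1 : 0 < eps / (2 * L).
    by apply: divr_gt0 => //; apply: mulr_gt0 => //; lra.
  have [d1 d10 Hd1] := He _ e1.
  have hnu : 0 < 4 * `|nu| + 1 by have := normr_ge0 nu; lra.
  pose del := Num.min (c / 2) (Num.min (d1 / L) (eps * c ^+ 2 / (4 * `|nu| + 1))).
  have del1 : del <= c / 2 by rewrite /del ge_min lexx.
  have del2 : del <= d1 / L by rewrite /del !ge_min lexx orbT.
  have del3 : del <= eps * c ^+ 2 / (4 * `|nu| + 1) by rewrite /del !ge_min lexx !orbT.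
  exists del.
    rewrite /del !lt_min !divr_gt0 // ?mulr_gt0 // ?exprn_gt0 //.
  move=> a [x [y [-> [Hcl Hy]]]].
  rewrite pt_sub enorm_pt dotv_pt => hN.
  have hQ := dotv_ge0 (x - u).
  have hs := sq_absle (y - c) hQ.
  have hy1 := ler_norm (y - c).
  have hy2 := ler_norm (- (y - c)); rewrite normrN in hy2.
  have yc1 : c / 2 <= y by lra.
  have yc2 : y <= 2 * c by lra.
  have y0 : 0 < y by lra.
  have fx : 0 < f x by have := ler_norm y; lra.
  have [w0 hw ht hst] := scal c0 yc1 yc2.
  have hk := Hd1 (pt x (- ln y)).
  rewrite pt_sub enorm_pt dotv_pt in hk.
  have ee : - ln y - - ln c = ln c - ln y by rewrite opprK addrC.
  rewrite ee in hk.
  apply: (comb_fwd (t := ln c - ln y) (L := L) (N1 := Num.sqrt (dotv (x - u) (x - u) + (ln c - ln y) ^+ 2)) (del := del)) => //.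
  + have e : c * (2 / c * `|y - c|) = 2 * `|y - c| by field; rewrite gt_eqF.
    have h1 : `|ln c - ln y| <= 2 / c * `|y - c| by rewrite -(ler_pM2l c0) e.
    have hn : 0 <= `|y - c| := normr_ge0 _.
    apply: sq_cmp => //; rewrite /L mulrDl mul1r; lra.
  + by rewrite -ler_pdivlMr.
  + have hcmp : Num.sqrt (dotv (x - u) (x - u) + (ln c - ln y) ^+ 2) <=
        L * Num.sqrt (dotv (x - u) (x - u) + (y - c) ^+ 2).
      have e : c * (2 / c * `|y - c|) = 2 * `|y - c| by field; rewrite gt_eqF.
      have h1 : `|ln c - ln y| <= 2 / c * `|y - c| by rewrite -(ler_pM2l c0) e.
      have hn : 0 <= `|y - c| := normr_ge0 _.
      apply: sq_cmp => //; rewrite /L mulrDl mul1r; lra.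
    apply: hk.
    * exists x, (- ln y); split => //; rewrite /psi_of fx; split; first exact: ltry.
      by rewrite lee_fin lerN2 ler_ln ?posrE //; have := ler_norm y; lra.
    * apply: (le_trans hcmp).
      have eL : L * (d1 / L) = d1 by field; rewrite gt_eqF.
      have : L * del <= L * (d1 / L) by rewrite ler_pM2l.
      rewrite eL.
      have : L * Num.sqrt (dotv (x - u) (x - u) + (y - c) ^+ 2) <= L * del.
        by rewrite ler_pM2l.
      lra.
- move=> Hl eps e0.
  pose L := 1 + 2 * c.
  have L1 : 1 <= L by rewrite /L; lra.
  have L0 : 0 < L by lra.
  have e1 : 0 < eps / (2 * L).
    by apply: divr_gt0 => //; apply: mulr_gt0 => //; lra.
  have [d1 d10 Hd1] := Hl _ e1.
  have hnu : 0 < 16 * `|nu| + 1 by have := normr_ge0 nu; lra.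
  pose del := Num.min (1 / 2) (Num.min (d1 / L) (eps / (16 * `|nu| + 1))).
  have del1 : del <= 1 / 2 by rewrite /del ge_min lexx.
  have del2 : del <= d1 / L by rewrite /del !ge_min lexx orbT.
  have del3 : del <= eps / (16 * `|nu| + 1) by rewrite /del !ge_min lexx !orbT.
  exists del.
    by rewrite /del !lt_min !divr_gt0.
  move=> a [x [xi [-> [hlt hle]]]].
  rewrite pt_sub enorm_pt dotv_pt => hN.
  have fx : 0 < f x.
    by move: hlt; rewrite /psi_of; case: ifPn => // _; rewrite ltxx.
  rewrite /psi_of fx lee_fin in hle.
  set t := xi - - ln c in hN *.
  have hQ := dotv_ge0 (x - u).
  have ht0 := sq_absle t hQ.
  have hta := ler_norm t.
  have htb := ler_norm (- t); rewrite normrN in htb.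
  pose y := expR (- xi).
  have y0 : 0 < y := expR_gt0 _.
  have lny : ln y = - xi by rewrite /y expRK.
  have ty : t = ln c - ln y by rewrite /t lny !opprK addrC.
  have yE : y = expR (- t) * c.
    have e : - xi = - t + ln c by rewrite /t; ring.
    by rewrite /y e expRD lnK ?posrE.
  have E1 := expR_ge1Dx (- t).
  have E2 := expR_ge1Dx t.
  have E3 : expR (- t) * expR t = 1 by rewrite -expRD addNr expR0.
  have E4 := expR_gt0 (- t).
  have E5 : expR (- t) <= 2 by nra.
  have yc1 : c / 2 <= y by rewrite yE; nra.
  have yc2 : y <= 2 * c by rewrite yE; nra.
  have [w0 hw htt hst] := scal c0 yc1 yc2.
  rewrite -ty in w0 hw htt hst.
  have yfx : y <= f x by rewrite -ler_ln ?posrE // lny; lra.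
  have hk := Hd1 (pt x y).
  rewrite pt_sub enorm_pt dotv_pt in hk.
  have hcmp : Num.sqrt (dotv (x - u) (x - u) + (y - c) ^+ 2) <=
      L * Num.sqrt (dotv (x - u) (x - u) + t ^+ 2).
    have hn : 0 <= `|t| := normr_ge0 _.
    apply: sq_cmp => //; rewrite /L mulrDl mul1r; lra.
  apply: (comb_bwd (s := y - c) (c := c) (L := L)
    (N1 := Num.sqrt (dotv (x - u) (x - u) + (y - c) ^+ 2)) (del := del)) => //.
  + by rewrite -ler_pdivlMr.
  + apply: hk.
    * exists x, y; split => //; split; first by apply: subset_closure.
      by rewrite gtr0_norm.
    * apply: (le_trans hcmp).
      have eL : L * (d1 / L) = d1 by field; rewrite gt_eqF.
      have : L * del <= L * (d1 / L) by rewrite ler_pM2l.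
      rewrite eL.
      have : L * Num.sqrt (dotv (x - u) (x - u) + t ^+ 2) <= L * del.
        by rewrite ler_pM2l.
      lra.
- move=> _ [z hz <-].
  move: hz; rewrite (pt_surj z); move: (lsubmx z) (rsubmx z 0 0) => a b hz.
  rewrite /Pd /pt row_mxKl.
  move=> eps e0; have [dl dl0 H] := hz eps e0; exists dl => // x hx hn.
  have := H (pt x c).
  rewrite pt_sub subrr dotv_pt mulr0 addr0 enorm_pt expr0n /= addr0.
  apply.
    exists x, c; split => //; split; last by rewrite gtr0_norm.
    apply: subset_closure; rewrite /supp_fun /=.
    by move: hx; rewrite /superlevel /=; lra.
  exact: hn.
Qed.
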